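(* In the formal power series ring $\mathbb Q[[u,v,z]]$, $$\sum_{k,l,n\geq 0}\{E_kE_l\}_n\,u^kv^lz^n=\frac{(1+z)(1+uvz)}{(1-uz)(1-vz)}.$$
   Context: For $i\geq1$, $X_i$ is the class function with $X_i(\sigma)$ = number of $i$-cycles of $\sigma$. For a partition $\alpha=1^{a_1}2^{a_2}\cdots$ ($a_i$ = number of parts equal to $i$, $|\alpha|=\sum ia_i$, $l(\alpha)=\sum a_i$) let $\binom X\alpha=\prod_i\binom{X_i}{a_i}$. For $l\geq0$ let $E_l=\sum_{\alpha\vdash l}(-1)^{|\alpha|-l(\alpha)}\binom X\alpha\in\mathbb C[X_1,X_2,\dotsc]$ (the character polynomial of $\bigwedge^l\mathbb C^n$; $E_0=1$). For $p\in\mathbb C[X_1,X_2,\dotsc]$ the signed moment is $\{p\}_n=\frac1{n!}\sum_{\sigma\in S_n}\mathrm{sgn}(\sigma)p(X_1(\sigma),X_2(\sigma),\dotsc)$, $n\geq0$. *)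

(* Defs.v *)
From HB Require Import structures.
From mathcomp Require Import all_boot all_order all_algebra all_fingroup.
Set Implicit Arguments. Unset Strict Implicit. Unset Printing Implicit Defensive.
Import Order.TTheory GRing.Theory Num.Theory.
Local Open Scope ring_scope.

Definition cyc_count (n : nat) (s : 'S_n) (i : nat) : nat :=
  #|[set c in porbits s | #|c| == i]|.

(* Character polynomials are represented by their evaluation on the vector
   x = (X_1, X_2, ...) given as a function  x : nat -> nat  (x i = X_i). *)

(* E_l = sum over partitions alpha |- l of (-1)^(|alpha| - l(alpha)) binom(X, alpha).
   A partition alpha = 1^{a_1} 2^{a_2} ... of l is encoded by its multiplicity
   vector a : 'I_l -> 'I_(l.+1), a j = a_{j+1} (number of parts equal to j+1),
   subject to \sum_j (j+1) a_{j+1} = l; this is a bijection with partitions of l. *)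
Definition E (l : nat) (x : nat -> nat) : rat :=
  \sum_(a : {ffun 'I_l -> 'I_l.+1} | (\sum_(j < l) j.+1 * a j == l)%N)
     (-1) ^+ (l - \sum_(j < l) a j)%N *
     \prod_(j < l) ('C(x j.+1, a j))%:R.

Definition smoment (n : nat) (p : (nat -> nat) -> rat) : rat :=
  (n`!%:R)^-1 * \sum_(s : 'S_n) (-1) ^+ odd_perm s * p (cyc_count s).

(* Formal power series in Q[[u,v,z]]: coefficient functions (k,l,n) |-> coeff of u^k v^l z^n. *)
Definition fps := nat -> nat -> nat -> rat.

Definition fps_add (F G : fps) : fps := fun k l n => F k l n + G k l n.
Definition fps_sub (F G : fps) : fps := fun k l n => F k l n - G k l n.
Definition fps_mul (F G : fps) : fps := fun k l n =>
  \sum_(a < k.+1) \sum_(b < l.+1) \sum_(c < n.+1)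
     F a b c * G (k - a)%N (l - b)%N (n - c)%N.
Definition fps_mono (i j m : nat) : fps := fun k l n =>
  if [&& k == i, l == j & n == m] then 1 else 0.
Definition fps_one : fps := fps_mono 0 0 0.
Definition fps_u : fps := fps_mono 1 0 0.
Definition fps_v : fps := fps_mono 0 1 0.
Definition fps_z : fps := fps_mono 0 0 1.

(* Main.v *)
Require Import Defs.
From mathcomp Require Import all_boot all_order all_algebra all_fingroup.
From mathcomp Require Import zify ring lra.
From Stdlib Require Import FunctionalExtensionality.
Set Implicit Arguments. Unset Strict Implicit. Unset Printing Implicit Defensive.
Import Order.TTheory GRing.Theory Num.Theory.
Local Open Scope ring_scope.
Lemma sum_ord_eq (K i : nat) (G : nat -> rat) :
  \sum_(a < K.+1) (if (a : nat) == i then G a else 0) = if (i <= K)%N then G i else 0.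
Proof.
case: ifP => Hi.
  rewrite (bigD1 (Ordinal (n:=K.+1) (m:=i) Hi)) //= eqxx big1 ?addr0 // => a /negbTE Ha.
  case: eqP => // Hai; move: Ha; suff -> : a = Ordinal (n:=K.+1) (m:=i) Hi by rewrite eqxx.
  by apply: val_inj.
rewrite big1 // => a _; case: eqP => // Hai; have := ltn_ord a; lia.
Qed.

Lemma sum_ord_subeq (K i : nat) (G : nat -> rat) :
  \sum_(a < K.+1) (if (K - a)%N == i then G a else 0) = if (i <= K)%N then G (K - i)%N else 0.
Proof.
case: ifP => Hi.
  transitivity (if (K - i <= K)%N then G (K - i)%N else 0); last by rewrite leq_subr.
  rewrite -sum_ord_eq.
  apply: eq_bigr => a _; have := ltn_ord a => Ha.
  have -> : ((K - a)%N == i) = ((a:nat) == (K - i)%N) by apply/eqP/eqP; lia.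
  by [].
rewrite big1 // => a _; case: eqP => //; have := ltn_ord a; lia.
Qed.

Lemma fps_mul_monoR F i j m k l n :
  fps_mul F (fps_mono i j m) k l n =
  if [&& (i <= k)%N, (j <= l)%N & (m <= n)%N] then F (k - i)%N (l - j)%N (n - m)%N else 0.
Proof.
rewrite /fps_mul.
transitivity (\sum_(a < k.+1) (if (k - a)%N == i then
   \sum_(b < l.+1) (if (l - b)%N == j then
   \sum_(c < n.+1) (if (n - c)%N == m then F a b c else 0) else 0) else 0)).
  apply: eq_bigr => a _; case: ifP => Ha; last first.
    by rewrite big1 // => b _; rewrite big1 // => c _; rewrite /fps_mono Ha /= mulr0.
  apply: eq_bigr => b _; case: ifP => Hb; last first.
    by rewrite big1 // => c _; rewrite /fps_mono Ha Hb /= mulr0.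
  apply: eq_bigr => c _; rewrite /fps_mono Ha Hb /=.
  by case: eqP => Hc; rewrite ?mulr1 ?mulr0.
rewrite (sum_ord_subeq k i (fun a => \sum_(b < l.+1) (if (l - b)%N == j then
   \sum_(c < n.+1) (if (n - c)%N == m then F a b c else 0) else 0))).
case: (i <= k)%N => //=.
rewrite (sum_ord_subeq l j (fun b => 
   \sum_(c < n.+1) (if (n - c)%N == m then F (k - i)%N b c else 0))).
case: (j <= l)%N => //=.
by rewrite (sum_ord_subeq n m (fun c => F (k - i)%N (l - j)%N c)).
Qed.

Lemma fps_mul_monoL F i j m k l n :
  fps_mul (fps_mono i j m) F k l n =
  if [&& (i <= k)%N, (j <= l)%N & (m <= n)%N] then F (k - i)%N (l - j)%N (n - m)%N else 0.
Proof.
rewrite /fps_mul.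
transitivity (\sum_(a < k.+1) (if (a:nat) == i then
   \sum_(b < l.+1) (if (b:nat) == j then
   \sum_(c < n.+1) (if (c:nat) == m then F (k - a)%N (l - b)%N (n - c)%N else 0) else 0) else 0)).
  apply: eq_bigr => a _; case: ifP => Ha; last first.
    by rewrite big1 // => b _; rewrite big1 // => c _; rewrite /fps_mono Ha /= mul0r.
  apply: eq_bigr => b _; case: ifP => Hb; last first.
    by rewrite big1 // => c _; rewrite /fps_mono Ha Hb /= mul0r.
  apply: eq_bigr => c _; rewrite /fps_mono Ha Hb /=.
  by case: eqP => Hc; rewrite ?mul1r ?mul0r.
rewrite (sum_ord_eq k i (fun a => \sum_(b < l.+1) (if (b:nat) == j then
   \sum_(c < n.+1) (if (c:nat) == m then F (k - a)%N (l - b)%N (n - c)%N else 0) else 0))).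
case: (i <= k)%N => //=.
rewrite (sum_ord_eq l j (fun b => 
   \sum_(c < n.+1) (if (c:nat) == m then F (k - i)%N (l - b)%N (n - c)%N else 0))).
case: (j <= l)%N => //=.
by rewrite (sum_ord_eq n m (fun c => F (k - i)%N (l - j)%N (n - c)%N)).
Qed.

Lemma fps_mul_addl F G H : fps_mul (fps_add F G) H = fps_add (fps_mul F H) (fps_mul G H).
Proof.
apply: functional_extensionality => k; apply: functional_extensionality => l;
apply: functional_extensionality => n.
rewrite /fps_mul /fps_add -!big_split /=; apply: eq_bigr => a _.
rewrite -!big_split /=; apply: eq_bigr => b _.
rewrite -!big_split /=; apply: eq_bigr => c _; by rewrite mulrDl.
Qed.

Lemma fps_mul_subl F G H : fps_mul (fps_sub F G) H = fps_sub (fps_mul F H) (fps_mul G H).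
Proof.
apply: functional_extensionality => k; apply: functional_extensionality => l;
apply: functional_extensionality => n.
rewrite /fps_mul /fps_sub -!sumrB /=; apply: eq_bigr => a _.
rewrite -!sumrB /=; apply: eq_bigr => b _.
rewrite -!sumrB /=; apply: eq_bigr => c _; by rewrite mulrBl.
Qed.

Lemma fps_mul_addr F G H : fps_mul H (fps_add F G) = fps_add (fps_mul H F) (fps_mul H G).
Proof.
apply: functional_extensionality => k; apply: functional_extensionality => l;
apply: functional_extensionality => n.
rewrite /fps_mul /fps_add -!big_split /=; apply: eq_bigr => a _.
rewrite -!big_split /=; apply: eq_bigr => b _.
rewrite -!big_split /=; apply: eq_bigr => c _; by rewrite mulrDr.
Qed.

Lemma fps_mul_subr F G H : fps_mul H (fps_sub F G) = fps_sub (fps_mul H F) (fps_mul H G).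
Proof.
apply: functional_extensionality => k; apply: functional_extensionality => l;
apply: functional_extensionality => n.
rewrite /fps_mul /fps_sub -!sumrB /=; apply: eq_bigr => a _.
rewrite -!sumrB /=; apply: eq_bigr => b _.
rewrite -!sumrB /=; apply: eq_bigr => c _; by rewrite mulrBr.
Qed.

Lemma fps_mono_mul i j m i' j' m' :
  fps_mul (fps_mono i j m) (fps_mono i' j' m') = fps_mono (i + i') (j + j') (m + m').
Proof.
apply: functional_extensionality => k; apply: functional_extensionality => l;
apply: functional_extensionality => n.
rewrite fps_mul_monoL /fps_mono.
case: (leqP i k) => Hk; case: (leqP j l) => Hl; case: (leqP m n) => Hn /=;
repeat (case: eqP => /= ?); try lia; by [].
Qed.

Definition Qs : fps := fun k l n => if n == (k + l)%N then 1 else 0.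

Definition cnt (k l n : nat) : rat :=
  (if (n == k + l)%N then 1 else 0) + (if (n == k + l + 1)%N then 1 else 0)
  + (if [&& (0 < k)%N, (0 < l)%N & (n + 1 == k + l)%N] then 1 else 0)
  + (if [&& (0 < k)%N, (0 < l)%N & (n == k + l)%N] then 1 else 0).

Ltac casebool := repeat (case: ifP => /=; [move=> ? | move/negbT => ?]).

Lemma Qs_inv : fps_mul Qs (fps_mul (fps_sub fps_one (fps_mul fps_u fps_z))
                       (fps_sub fps_one (fps_mul fps_v fps_z))) = fps_one.
Proof.
rewrite /fps_one /fps_u /fps_v /fps_z !fps_mono_mul fps_mul_subl !fps_mul_subr !fps_mono_mul.
apply: functional_extensionality => k; apply: functional_extensionality => l;
apply: functional_extensionality => n.
rewrite /fps_sub !fps_mul_monoR /Qs /fps_mono /=.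
casebool; try lra; exfalso; lia.
Qed.

Lemma rhs_eq : fps_mul (fps_mul (fps_add fps_one fps_z)
                       (fps_add fps_one (fps_mul (fps_mul fps_u fps_v) fps_z))) Qs =
   (fun k l n => cnt k l n).
Proof.
rewrite /fps_one /fps_u /fps_v /fps_z !fps_mono_mul fps_mul_addl !fps_mul_addr !fps_mono_mul.
rewrite !fps_mul_addl.
apply: functional_extensionality => k; apply: functional_extensionality => l;
apply: functional_extensionality => n.
rewrite /fps_add !fps_mul_monoL /cnt /=.
have -> : (if [&& (0 <= k)%N, (0 <= l)%N & (1 <= n)%N] then Qs (k - 0)%N (l - 0)%N (n - 1)%N else 0)
   = (if (n == k + l + 1)%N then 1 else 0).
  by rewrite /Qs; casebool; try lra; exfalso; lia.
have -> : (if [&& (1 <= k)%N, (1 <= l)%N & (1 <= n)%N] then Qs (k - 1)%N (l - 1)%N (n - 1)%N else 0)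
   = (if [&& (0 < k)%N, (0 < l)%N & (n + 1 == k + l)%N] then 1 else 0).
  by rewrite /Qs; casebool; try lra; exfalso; lia.
have -> : (if [&& (1 <= k)%N, (1 <= l)%N & (2 <= n)%N] then Qs (k - 1)%N (l - 1)%N (n - 2)%N else 0)
   = (if [&& (0 < k)%N, (0 < l)%N & (n == k + l)%N] then 1 else 0).
  by rewrite /Qs; casebool; try lra; exfalso; lia.
rewrite /Qs !subn0.
set a1 := (if _ then _ else _); set a2 := (if _ then _ else _);
set a3 := (if _ then _ else _); set a4 := (if _ then _ else _).
lra.
Qed.
Section EPoly.
Variable k : nat.
Definition eqm (p q : {poly rat}) := exists r, p = q + r * 'X^(k.+1).

Lemma eqm_refl p : eqm p p.
Proof. by exists 0; rewrite mul0r addr0. Qed.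

Lemma eqm_add p1 q1 p2 q2 : eqm p1 q1 -> eqm p2 q2 -> eqm (p1 + p2) (q1 + q2).
Proof. by move=> [r1 ->] [r2 ->]; exists (r1 + r2); ring. Qed.

Lemma eqm_mul p1 q1 p2 q2 : eqm p1 q1 -> eqm p2 q2 -> eqm (p1 * p2) (q1 * q2).
Proof.
by move=> [r1 ->] [r2 ->]; exists (r1 * q2 + q1 * r2 + r1 * r2 * 'X^(k.+1)); ring.
Qed.

Lemma eqm_coef p q : eqm p q -> p`_k = q`_k.
Proof. by move=> [r ->]; rewrite coefD coefMXn ltnSn addr0. Qed.

Lemma eqm_prod (I : Type) (r : seq I) (P : pred I) (F G : I -> {poly rat}) :
  (forall i, P i -> eqm (F i) (G i)) -> eqm (\prod_(i <- r | P i) F i) (\prod_(i <- r | P i) G i).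
Proof.
move=> H; apply: (big_ind2 eqm) => //; [exact: eqm_refl | exact: eqm_mul].
Qed.

Lemma eqm_sum (I : Type) (r : seq I) (P : pred I) (F G : I -> {poly rat}) :
  (forall i, P i -> eqm (F i) (G i)) -> eqm (\sum_(i <- r | P i) F i) (\sum_(i <- r | P i) G i).
Proof.
move=> H; apply: (big_ind2 eqm) => //; [exact: eqm_refl | exact: eqm_add].
Qed.

Lemma eqm_Xn c e : (k < e)%N -> eqm (c * 'X^e) 0.
Proof.
move=> He; exists (c * 'X^(e - k.+1)); rewrite add0r -mulrA -exprD; congr (_ * 'X^_); lia.
Qed.
End EPoly.

Definition wpol (i : nat) : {poly rat} := ((-1)^+i)%:P * 'X^(i.+1).

Definition Tm (m i a : nat) : {poly rat} := (('C(m, a))%:R * (-1)^+(i * a))%:P * 'X^(i.+1 * a).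

Lemma powF m i : (1 + wpol i)^+m = \sum_(a < m.+1) Tm m i a.
Proof.
rewrite addrC exprD1n; apply: eq_bigr => a _.
rewrite /wpol /Tm exprMn -rmorphXn /= -exprM -exprM rmorphM /= -mulr_natl.
by rewrite polyC_natr mulrA mulnC.
Qed.

Lemma E_poly x k N : (k <= N)%N -> E k x = (\prod_(i < N) (1 + wpol i) ^+ (x i.+1))`_k.
Proof.
move=> hkN.
have step1 : eqm k (\prod_(i < N) (1 + wpol i) ^+ (x i.+1))
   (\prod_(i < N) (if (i < k)%N then \sum_(a < k.+1) Tm (x i.+1) i a else 1)).
  apply: eqm_prod => i _; case: ifP => Hik.
    rewrite powF; set m := x i.+1.
    rewrite (big_ord_widen (m + k).+1 (Tm m i)) ?ltnS ?leq_addr //.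
    rewrite (big_ord_widen (m + k).+1 (Tm m i)) ?ltnS ?leq_addl //.
    rewrite big_mkcond [X in eqm _ _ X]big_mkcond /=.
    apply: eqm_sum => a _.
    have Tz : (m < a)%N -> Tm m i a = 0 by move=> ?; rewrite /Tm bin_small ?mul0r ?mul0r.
    case: (ltnP a k.+1) => Hak.
      case: ifP => Ham; first exact: eqm_refl.
      rewrite Tz; [exact: eqm_refl | lia].
    case: ifP => Ham; last exact: eqm_refl.
    rewrite /Tm; apply: eqm_Xn; nia.
  have H1 : eqm k (1 + wpol i) 1.
    have := eqm_add (eqm_refl k 1) (eqm_Xn (k:=k) ((-1)^+i)%:P (e := i.+1) _).
    by rewrite addr0; apply; lia.
  elim: (x i.+1) => [|m IH]; first exact: eqm_refl.
  by have := eqm_mul H1 IH; rewrite mulr1 exprS.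
rewrite (eqm_coef step1) -big_mkcond /= -(big_ord_widen (n1:=k) N (fun i => \sum_(a < k.+1) Tm (x i.+1) i a) hkN).
rewrite bigA_distr_bigA coef_sum /E big_mkcond /=; apply: eq_bigr => f _.
have -> : \prod_(i < k) Tm (x i.+1) i (f i) =
   (\prod_(i < k) (('C(x i.+1, f i))%:R * (-1)^+(i * f i)))%:P * 'X^(\sum_(i < k) i.+1 * f i).
  by rewrite /Tm big_split /= -rmorph_prod prodrXr.
rewrite coefCM coefXn eq_sym; case: eqP => Hs; last by rewrite mulr0.
rewrite mulr1 big_split /= prodrXr mulrC; congr (_ * (-1) ^+ _).
have : (\sum_(i < k) i.+1 * f i = \sum_(i < k) i * f i + \sum_(i < k) f i)%N.
  by rewrite -big_split /=; apply: eq_bigr => i _; rewrite mulSn addnC.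
move=> Hsum; rewrite {1}Hs Hsum addnK.
by [].
Qed.
Lemma prod_1D (T : finType) (R : comNzRingType) (A : {set T}) (w : T -> R) :
  \prod_(i in A) (1 + w i) = \sum_(B in powerset A) \prod_(i in B) w i.
Proof.
pose h (i : T) (b : bool) : R := if b then (if i \in A then w i else 0) else 1.
transitivity (\prod_(i : T) \sum_(b : bool) h i b).
  rewrite big_mkcond /=; apply: eq_bigr => i _; rewrite big_bool /h.
  case: (i \in A); [exact: addrC | exact: (esym (add0r _))].
rewrite bigA_distr_bigA /=.
rewrite (reindex (fun B : {set T} => [ffun i => i \in B])) /=; last first.
  exists (fun f : {ffun T -> bool} => [set i | f i]) => [B _ | f _].
    by apply/setP => i; rewrite inE ffunE.
  by apply/ffunP => i; rewrite ffunE inE.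
rewrite [RHS]big_mkcond /=; apply: eq_bigr => B _.
rewrite powersetE.
transitivity (\prod_(i in B) (if i \in A then w i else 0)).
  rewrite [RHS]big_mkcond /=; apply: eq_bigr => i _; by rewrite ffunE /h.
case: ifP => HBA.
  by apply: eq_bigr => i iB; rewrite (subsetP HBA i iB).
have [i /andP[iB iA]] : exists i, (i \in B) && (i \notin A).
  move/negbT: HBA => /subsetPn [i iB iA]; exists i; by rewrite iB iA.
by rewrite (bigD1 i) //= (negbTE iA) mul0r.
Qed.

Section Perm.
Variable n : nat.
Implicit Types (s : 'S_n) (S : {set 'I_n}) (U : {set {set 'I_n}}).

Lemma porbit_eq_mem s x y : x \in porbit s y -> porbit s x = porbit s y.
Proof. by move=> h; apply/eqP; rewrite eq_porbit_mem. Qed.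

Lemma porbits_mem s c x : c \in porbits s -> x \in c -> c = porbit s x.
Proof. by move=> /imsetP [y _ ->] /porbit_eq_mem ->. Qed.

Lemma trivI_sub_porbits s U : U \subset porbits s -> trivIset U.
Proof.
move=> HU; apply/trivIsetP => A B HA HB; apply: contraR => /pred0Pn [x /andP [xA xB]].
by rewrite (porbits_mem (subsetP HU _ HA) xA) (porbits_mem (subsetP HU _ HB) xB).
Qed.

Lemma card_cover_sub s U : U \subset porbits s -> #|cover U| = (\sum_(c in U) #|c|)%N.
Proof.
by move=> HU; apply/eqP; rewrite (eq_leqif (leq_card_cover U)); apply: trivI_sub_porbits HU.
Qed.

Lemma card_porbit_bounds s c : c \in porbits s -> (0 < #|c| <= n)%N.
Proof.
move=> /imsetP [y _ ->]; rewrite lt0n card_porbit_neq0 /=.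
by apply: leq_trans (max_card _) _; rewrite card_ord.
Qed.


Lemma prod_porbits s N : (n <= N)%N ->
  \prod_(c in porbits s) (1 + wpol (#|c|.-1)) = \prod_(i < N) (1 + wpol i) ^+ (cyc_count s i.+1).
Proof.
move=> hN; rewrite /cyc_count.
transitivity (\prod_(i < N) \prod_(c in porbits s | #|c| == i.+1) (1 + wpol i)); last first.
  apply: eq_bigr => i _; rewrite -prodr_const; apply: eq_bigl => c; by rewrite inE.
under [RHS]eq_bigr do rewrite big_mkcondr /=.
rewrite exchange_big /=; apply: eq_bigr => c Hc.
have /andP [h0 h1] := card_porbit_bounds Hc.
have hc : (#|c|.-1 < N)%N by lia.
rewrite -big_mkcond /= (big_pred1 (Ordinal hc)) //= => i.
apply/eqP/eqP => [H|H]; [apply: val_inj => /=; lia | by rewrite H /= prednK].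
Qed.

Lemma porbit_succ s x y : (s x \in porbit s y) = (x \in porbit s y).
Proof.
have E1 : porbit s (s x) = porbit s x by have := porbit_perm s 1 x; rewrite expg1.
by rewrite -!eq_porbit_mem E1.
Qed.

Lemma cover_inv s U : U \subset porbits s -> s \in ('N(cover U | 'P))%g.
Proof.
move=> HU; apply/astabsP => x /=; rewrite apermE /cover.
apply/bigcupP/bigcupP => -[c Hc xc]; exists c => //;
  have := subsetP HU _ Hc => /imsetP [y _ Ey]; move: xc; by rewrite Ey porbit_succ.
Qed.

Lemma N_iter s S x i : s \in ('N(S | 'P))%g -> x \in S -> (s ^+ i)%g x \in S.
Proof.
move=> Hs xS; have Hi : (s ^+ i)%g \in ('N(S | 'P))%g by rewrite groupX.
by have := astabs_act x Hi; rewrite /= apermE => ->.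
Qed.

Lemma restr_porbit_in s S x : s \in ('N(S | 'P))%g -> x \in S ->
  porbit (restr_perm S s) x = porbit s x.
Proof.
move=> Hs xS.
have Hi : forall i, ((restr_perm S s) ^+ i)%g x = (s ^+ i)%g x.
  elim=> [|i IH]; first by rewrite !expg0 !perm1.
  by rewrite !expgSr !permM IH restr_permE // N_iter.
by apply/setP => y; apply/porbitP/porbitP => -[i ->]; exists i; rewrite Hi.
Qed.

Lemma restr_porbit_out s S x : x \notin S -> porbit (restr_perm S s) x = [set x].
Proof.
move=> xS.
have Hi : forall i, ((restr_perm S s) ^+ i)%g x = x.
  elim=> [|i IH]; first by rewrite !expg0 !perm1.
  by rewrite expgSr permM IH (out_perm (restr_perm_on S s)).
apply/setP => y; rewrite inE; apply/porbitP/eqP => [[i ->]|->]; first by rewrite Hi.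
by exists 0; rewrite expg0 perm1.
Qed.

Lemma in_cover_porbit s U x : U \subset porbits s -> x \in cover U -> porbit s x \in U.
Proof.
move=> HU /bigcupP [c Hc xc]; by rewrite -(porbits_mem (subsetP HU _ Hc) xc).
Qed.

Lemma porbits_restr s U : U \subset porbits s ->
  porbits (restr_perm (cover U) s) = U :|: [set [set x] | x in ~: cover U].
Proof.
move=> HU; have nS := cover_inv HU.
apply/setP => c; rewrite inE; apply/imsetP/orP.
  move=> [x _ ->]; case: (boolP (x \in cover U)) => xS.
    by left; rewrite restr_porbit_in // in_cover_porbit.
  by right; rewrite restr_porbit_out //; apply: imset_f; rewrite inE.
move=> [cU | /imsetP [x xS ->]].
  have /andP [h0 _] := card_porbit_bounds (subsetP HU _ cU).
  have /card_gt0P [x xc] := h0.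
  have xS : x \in cover U by apply/bigcupP; exists c.
  by exists x => //; rewrite restr_porbit_in // -(porbits_mem (subsetP HU _ cU) xc).
by exists x => //; rewrite restr_porbit_out //; move: xS; rewrite inE.
Qed.

Lemma card_porbits_restr s U : U \subset porbits s ->
  #|porbits (restr_perm (cover U) s)| = (#|U| + (n - #|cover U|))%N.
Proof.
move=> HU; rewrite porbits_restr // cardsU.
have -> : U :&: [set [set x] | x in ~: cover U] = set0.
  apply/setP => c; rewrite !inE; apply/andP => -[cU /imsetP [x xS Ec]].
  move: xS; rewrite inE => /negP; apply; apply/bigcupP; exists c => //; by rewrite Ec inE.
rewrite cards0 subn0 card_imset; last exact: set1_inj.
have := cardsC (cover U); rewrite card_ord => HH; congr (_ + _); move: HH; move: (#|cover U|) (#|~: cover U|) => a b; lia.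
Qed.

Lemma card_U_le s U : U \subset porbits s -> (#|U| <= #|cover U|)%N.
Proof.
move=> HU; rewrite (card_cover_sub HU) -sum1_card; apply: leq_sum => c Hc.
by have /andP [] := card_porbit_bounds (subsetP HU _ Hc).
Qed.

Lemma sign_even (a b : nat) : (-1)^+(a + 2 * b) = (-1)^+a :> rat.
Proof. by rewrite exprD exprM expr2 mulrNN mulr1 expr1n mulr1. Qed.

Lemma sign_restr s U : U \subset porbits s ->
  (-1)^+(odd_perm (restr_perm (cover U) s)) = (-1)^+(#|cover U| - #|U|)%N :> rat.
Proof.
move=> HU; rewrite /odd_perm card_ord card_porbits_restr //.
rewrite signr_addb !signr_odd -exprD.
have hm : (#|cover U| <= n)%N by apply: leq_trans (max_card _) _; rewrite card_ord.
have hU := card_U_le HU.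
move: hm hU; move: (#|cover U|) (#|U|) => m u hm hU.
have -> : (n + (u + (n - m)) = (m - u) + 2 * (n - m + u))%N by lia.
exact: sign_even.
Qed.

Lemma cover_inv_sets s S : s \in ('N(S | 'P))%g -> cover [set c in porbits s | c \subset S] = S.
Proof.
move=> Hs; apply/setP => x; apply/bigcupP/idP => [[c] | xS].
  by rewrite inE => /andP [_ /subsetP H] /H.
exists (porbit s x); last exact: porbit_id.
rewrite inE imset_f //=; apply/subsetP => y /porbitP [i ->]; exact: N_iter.
Qed.

Lemma sub_cover_eq s U : ([set c in porbits s | c \subset cover U] == U) = (U \subset porbits s).
Proof.
apply/eqP/idP => [<- | HU]; first by apply/subsetP => c; rewrite inE => /andP [].
apply/setP => c; rewrite inE; apply/andP/idP => [[cP csub] | cU]; last first.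
  by split; [exact: (subsetP HU) | rewrite /cover; exact: bigcup_sup].
have /andP [h0 _] := card_porbit_bounds cP.
have /card_gt0P [x xc] := h0.
have xU : x \in cover U by exact: (subsetP csub).
by rewrite (porbits_mem cP xc); exact: in_cover_porbit.
Qed.

Lemma E_inv s k : E k (cyc_count s) =
  \sum_(S | (s \in ('N(S | 'P))%g) && (#|S| == k)) (-1)^+(odd_perm (restr_perm S s)).
Proof.
rewrite (@E_poly (cyc_count s) k (n + k)%N) ?leq_addl // -(@prod_porbits s (n + k)%N) ?leq_addr // prod_1D coef_sum.
rewrite (reindex_onto (fun U : {set {set 'I_n}} => cover U)
                      (fun S => [set c in porbits s | c \subset S])) /=; last first.
  by move=> S /andP [HS _]; apply: cover_inv_sets.
rewrite [LHS]big_mkcond [RHS]big_mkcond; apply: eq_bigr => U _.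
rewrite sub_cover_eq powersetE.
case: (boolP (U \subset porbits s)) => HU; last by rewrite andbF.
rewrite andbT cover_inv //=.
have -> : \prod_(c in U) wpol #|c|.-1 = ((-1)^+(#|cover U| - #|U|))%:P * 'X^(#|cover U|).
  rewrite /wpol big_split /= -rmorph_prod !prodrXr (card_cover_sub HU).
  have E1 : (\sum_(c in U) #|c|.-1 + #|U| = \sum_(c in U) #|c|)%N.
    rewrite -sum1_card -big_split /=; apply: eq_bigr => c Hc.
    by have /andP [h0 _] := card_porbit_bounds (subsetP HU _ Hc); rewrite addn1 prednK.
  have E2 : (\sum_(c in U) (#|c|.-1).+1 = \sum_(c in U) #|c|)%N.
    apply: eq_bigr => c Hc.
    by have /andP [h0 _] := card_porbit_bounds (subsetP HU _ Hc); rewrite prednK.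
  rewrite E2 -E1 addnK; by [].
rewrite coefCM coefXn sign_restr // eq_sym.
by case: eqP => _; rewrite ?mulr1 ?mulr0.
Qed.

Local Notation NP S := ('N(S | 'P))%g.

Lemma NPP s S : reflect (forall x, (s x \in S) = (x \in S)) (s \in NP S).
Proof. by apply: (iffP astabsP) => H x; have := H x; rewrite /= apermE. Qed.

Lemma NP_I s S T : s \in NP S -> s \in NP T -> s \in NP (S :&: T).
Proof. by move=> /NPP HS /NPP HT; apply/NPP => x; rewrite !inE HS HT. Qed.

Lemma NP_D s S T : s \in NP S -> s \in NP T -> s \in NP (S :\: T).
Proof. by move=> /NPP HS /NPP HT; apply/NPP => x; rewrite !inE HS HT. Qed.

Lemma NP_C s S : s \in NP S -> s \in NP (~: S).
Proof. by move=> /NPP HS; apply/NPP => x; rewrite !inE HS. Qed.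

Lemma NP_T s : s \in NP [set: 'I_n].
Proof. by apply/NPP => x; rewrite !inE. Qed.

Lemma restr_in s S x : s \in NP S -> x \in S -> restr_perm S s x = s x.
Proof. by move=> Hs xS; rewrite restr_permE. Qed.

Lemma restr_out s S x : x \notin S -> restr_perm S s x = x.
Proof. by move=> xS; rewrite (out_perm (restr_perm_on S s)). Qed.

Lemma restr_split X Y s : s \in NP X -> s \in NP Y ->
  restr_perm X s = (restr_perm (X :&: Y) s * restr_perm (X :\: Y) s)%g.
Proof.
move=> HX HY; have HI := NP_I HX HY; have HD := NP_D HX HY.
apply/permP => z; rewrite permM.
case: (boolP (z \in X)) => zX; last first.
  by rewrite !restr_out // !inE (negbTE zX) ?andbF.
have szX : s z \in X by move/NPP: HX => ->.
case: (boolP (z \in Y)) => zY.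
  have zI : z \in X :&: Y by rewrite inE zX zY.
  have szI : s z \in X :&: Y by move/NPP: HI => ->.
  rewrite (restr_in HI zI) (restr_in HX zX) restr_out //.
  by move: szI; rewrite !inE => /andP [-> ->].
have zD : z \in X :\: Y by rewrite !inE zX zY.
have zI : z \notin X :&: Y by rewrite inE zX zY.
by rewrite (restr_out _ zI) (restr_in HD zD) (restr_in HX zX).
Qed.

Lemma restr_setT s : restr_perm [set: 'I_n] s = s.
Proof. by apply/permP => z; rewrite restr_in ?NP_T ?inE. Qed.

Lemma restr_small X s : s \in NP X -> (#|X| <= 1)%N -> restr_perm X s = 1%g.
Proof.
move=> HX H1; apply/permP => z; rewrite perm1.
case: (boolP (z \in X)) => zX; last by rewrite restr_out.
rewrite restr_in //; have szX : s z \in X by move/NPP: HX => ->.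
by move/card_le1_eqP: H1 => H1; apply: (H1 z (s z) zX szX).
Qed.

Lemma odd_split X Y s : s \in NP X -> s \in NP Y ->
  odd_perm (restr_perm X s) = odd_perm (restr_perm (X :&: Y) s) (+) odd_perm (restr_perm (X :\: Y) s).
Proof. by move=> HX HY; rewrite (restr_split HX HY) odd_permM. Qed.

Definition wt S T s : rat :=
  (-1)^+(odd_perm s) * (-1)^+(odd_perm (restr_perm S s)) * (-1)^+(odd_perm (restr_perm T s)).

Lemma wt_small S T s : s \in NP S -> s \in NP T ->
  (#|S :&: T| <= 1)%N -> (#|~: (S :|: T)| <= 1)%N -> wt S T s = 1.
Proof.
move=> HS HT hA hD.
have HCS := NP_C HS.
have e1 := odd_split (NP_T s) HS; rewrite setTI setTD restr_setT in e1.
have e2 := odd_split HS HT.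
have e3 := odd_split HCS HT.
have e4 := odd_split HT HS.
have eA : odd_perm (restr_perm (S :&: T) s) = false.
  by rewrite restr_small ?odd_perm1 // NP_I.
have eD : odd_perm (restr_perm (~: S :\: T) s) = false.
  rewrite restr_small ?odd_perm1 ?NP_D //.
  by rewrite setDE -setCU.
rewrite /wt -!signr_addb e1 e2 e3 e4 (setIC T S) eA.
rewrite (_ : T :\: S = ~: S :&: T); last by rewrite setDE setIC.
rewrite eD.
by case: (odd_perm (restr_perm (S :\: T) s)); case: (odd_perm (restr_perm (~: S :&: T) s)).
Qed.
End Perm.

Section Perm2.
Variable n : nat.
Implicit Types (s : 'S_n) (S : {set 'I_n}) (U : {set {set 'I_n}}).
Local Notation NP S := ('N(S | 'P))%g.
Lemma sum_inv0 (P : pred 'S_n) (f : 'S_n -> rat) t :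
  (forall s, P (s * t)%g = P s) -> (forall s, P s -> f (s * t)%g = - f s) ->
  \sum_(s | P s) f s = 0.
Proof.
move=> HP Hf; set X := (\sum_(s | P s) f s).
have : X = - X.
  rewrite {1}/X (reindex_inj (mulIg t)) /= /X -sumrN.
  by apply: eq_big => [s|s]; [exact: HP | rewrite HP; exact: Hf].
move=> H; lra.
Qed.

Lemma tperm_NP S x y : (x \in S) = (y \in S) -> tperm x y \in NP S.
Proof. by move=> Hxy; apply/NPP => z; case: tpermP => [->|->|//]. Qed.

Lemma restr_tperm S x y : (x \in S) = (y \in S) ->
  restr_perm S (tperm x y) = if x \in S then tperm x y else 1%g.
Proof.
move=> Hxy; have Ht := tperm_NP Hxy.
apply/permP => z; case: (boolP (z \in S)) => zS.
  rewrite restr_in //; case: ifP => // xS; rewrite perm1 tpermD //.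
    by apply/eqP => Exz; move: xS; rewrite Exz zS.
  by apply/eqP => Eyz; move: xS; rewrite Hxy Eyz zS.
rewrite restr_out //; case: ifP => xS; last by rewrite perm1.
rewrite tpermD //.
  by apply/eqP => Exz; move: zS; rewrite -Exz xS.
by apply/eqP => Eyz; move: zS; rewrite -Eyz -Hxy xS.
Qed.

Lemma odd_restr_mul_tperm S s x y : s \in NP S -> (x \in S) = (y \in S) ->
  odd_perm (restr_perm S (s * tperm x y)%g) =
  odd_perm (restr_perm S s) (+) ((x \in S) && (x != y)).
Proof.
move=> Hs Hxy; rewrite morphM //= ?tperm_NP // odd_permM restr_tperm //.
by case: (x \in S); rewrite ?odd_tperm ?odd_perm1.
Qed.

Lemma wt_flip S T s x y : x != y -> s \in NP S -> s \in NP T ->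
  (x \in S) = (y \in S) -> (x \in T) = (y \in T) -> (x \in S) = (x \in T) ->
  wt S T (s * tperm x y)%g = - wt S T s.
Proof.
move=> nxy HS HT hS hT hST.
rewrite /wt !odd_restr_mul_tperm // odd_permM odd_tperm nxy -hST !andbT.
move: (odd_perm s) (odd_perm (restr_perm S s)) (odd_perm (restr_perm T s)) => a b c.
by case: (x \in S); case: a; case: b; case: c => /=; rewrite ?expr0 ?expr1; lra.
Qed.

Definition W S T := \sum_(s | (s \in NP S) && (s \in NP T)) wt S T s.

Lemma two_elems (X : {set 'I_n}) : (1 < #|X|)%N -> exists x y, [/\ x \in X, y \in X & x != y].
Proof.
move=> h; have /card_gt0P [x xX] : (0 < #|X|)%N by lia.
have : (0 < #|X :\ x|)%N by rewrite (cardsD1 x X) xX in h; lia.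
move=> /card_gt0P [y]; rewrite !inE => /andP [nyx yX].
by exists x, y; split => //; rewrite eq_sym.
Qed.

Lemma W_val S T : W S T =
  if (#|S :&: T| <= 1)%N && (#|~: (S :|: T)| <= 1)%N then (#|NP S :&: NP T|)%:R else 0.
Proof.
rewrite /W; case: ifP => [/andP [hA hD] | hbad].
  transitivity (\sum_(s in NP S :&: NP T) (1 : rat)).
    apply: eq_big => s; first by rewrite in_setI.
    move=> /andP [HS HT].
    exact: wt_small.
  by rewrite sumr_const.
have [x [y [xX yX nxy]]] : exists x y, [/\ ((x \in S) && (x \in T) && (y \in S) && (y \in T))
         || ((x \notin S) && (x \notin T) && (y \notin S) && (y \notin T)), True & x != y].
  move/negbT: hbad; rewrite negb_and -!ltnNge => /orP [] /two_elems [x [y [xA yA nxy]]].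
    exists x, y; split => //; move: xA yA; rewrite !inE => /andP [-> ->] /andP [-> ->] //.
  exists x, y; split => //; move: xA yA; rewrite !inE !negb_or => /andP [-> ->] /andP [-> ->].
  by rewrite orbT.
have [hS hT hST] : [/\ (x \in S) = (y \in S), (x \in T) = (y \in T) & (x \in S) = (x \in T)].
  by case/orP: xX => /andP [/andP [/andP [h1 h2] h3] h4];
     split; move: h1 h2 h3 h4; case: (x \in S); case: (x \in T); case: (y \in S); case: (y \in T).
apply: (sum_inv0 (t := tperm x y)) => [s|s /andP [HS HT]].
  by rewrite !groupMr // tperm_NP.
exact: wt_flip.
Qed.

Lemma triple_distr (I J : finType) (c : rat) (PS : pred I) (PT : pred J) (a : I -> rat) (b : J -> rat) :
  c * ((\sum_(S | PS S) a S) * (\sum_(T | PT T) b T)) =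
  \sum_(S | PS S) \sum_(T | PT T) c * (a S * b T).
Proof.
rewrite big_distrl /= mulr_sumr; apply: eq_bigr => S _.
by rewrite big_distrr /= mulr_sumr.
Qed.

Lemma if_sum (J : finType) (b : bool) (F : J -> rat) :
  (if b then \sum_j F j else 0) = \sum_j (if b then F j else 0).
Proof. by case: b => //; rewrite big1. Qed.

Lemma main_sum k l :
  \sum_(s : 'S_n) (-1)^+(odd_perm s) * (E k (cyc_count s) * E l (cyc_count s)) =
  \sum_(S : {set 'I_n} | #|S| == k) \sum_(T : {set 'I_n} | #|T| == l) W S T.
Proof.
under eq_bigr do rewrite !E_inv triple_distr big_mkcond /=.
under eq_bigr do under eq_bigr do rewrite big_mkcond /=.
rewrite exchange_big /= [RHS]big_mkcond /=; apply: eq_bigr => S _.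
case: (boolP (#|S| == k)) => hS; last first.
  by rewrite big1 // => s _; rewrite andbF.
under eq_bigr do rewrite andbT if_sum.
rewrite exchange_big /= [RHS]big_mkcond /=.
rewrite [RHS](@eq_bigr _ _ _ _ _ _ _ (fun T => \sum_(s : 'S_n) (if s \in NP S then
   if (s \in NP T) && (#|T| == l) then (-1)^+(odd_perm s) * ((-1)^+(odd_perm (restr_perm S s))
      * (-1)^+(odd_perm (restr_perm T s))) else 0 else 0))) //.
move=> T _.
case: (boolP (#|T| == l)) => hT; last first.
  by rewrite big1 // => s _; rewrite andbF; case: ifP.
rewrite /W big_mkcond /=; apply: eq_bigr => s _; rewrite andbT.
case: (s \in NP S); case: (s \in NP T) => //=.
by rewrite /wt mulrA.
Qed.
End Perm2.



Lemma perm_match (T : finType) (K : eqType) (f : T -> K) : forall m (g : T -> K),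
  (#|[set x | g x != f x]| <= m)%N ->
  (forall c, #|[set x | g x == c]| = #|[set x | f x == c]|) ->
  exists p : {perm T}, forall x, g (p x) = f x.
Proof.
elim=> [|m IH] g hm hc.
  have H0 : #|[set x | g x != f x]| = 0%N by lia.
  exists 1%g => x; rewrite perm1; apply/eqP; apply: contraT => hx.
  have : x \in [set x | g x != f x] by rewrite inE.
  by rewrite (cards0_eq H0) inE.
case: (boolP [exists x, g x != f x]) => hex; last first.
  exists 1%g => x; rewrite perm1; apply/eqP; apply: contraT => hx.
  by move/existsPn: hex => /(_ x); rewrite hx.
move/existsP: hex => [x hx].
set c := f x.
have [y /andP [gy fy]] : exists y, (g y == c) && (f y != c).
  case: (boolP [exists y, (g y == c) && (f y != c)]) => [/existsP [y hy] | /existsPn H]; first by exists y.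
  have sub : [set y | g y == c] \subset [set y | f y == c] :\ x.
    apply/subsetP => y; rewrite !inE => gyc.
    have := H y; rewrite gyc /= negbK => fyc; rewrite fyc andbT.
    by apply: contraTneq hx => eyx; rewrite -eyx (eqP gyc) (eqP fyc) eqxx.
  have := subset_leq_card sub; rewrite hc (cardsD1 x [set y | f y == c]) inE eqxx /=.
  lia.
subst c.
have nxy : x != y by apply/eqP => exy; move: fy; rewrite -exy eqxx.
pose t := tperm x y.
have Hmis : [set z | g (t z) != f z] \subset [set z | g z != f z] :\ x.
  apply/subsetP => z; rewrite !inE /t.
  case: tpermP => [-> | -> | /eqP nzx /eqP nzy].
  - by rewrite (eqP gy) eqxx.
  - by move=> _; rewrite (eqP gy) [f x == _]eq_sym fy andbT eq_sym.
  - by move=> ->; rewrite andbT.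
have hm' : (#|[set z | g (t z) != f z]| <= m)%N.
  have := subset_leq_card Hmis; rewrite (cardsD1 x [set z | g z != f z]) inE hx /= in hm.
  lia.
have hc' : forall c', #|[set z | g (t z) == c']| = #|[set z | f z == c']|.
  move=> c'; rewrite -hc -(card_preimset [set x | g x == c'] (@perm_inj _ t)).
  by apply: eq_card => z; rewrite !inE.
have [p' Hp'] := IH (fun z => g (t z)) hm' hc'.
by exists (p' * t)%g => z; rewrite permM.
Qed.

Section Orb.
Variable n : nat.
Local Notation NP S := ('N(S | 'P))%g.
Local Notation pairT := ({set 'I_n} * {set 'I_n})%type.

Definition act2 (x : pairT) (p : 'S_n) : pairT := ([set p z | z in x.1], [set p z | z in x.2]).

Lemma act2_1 : act2^~ 1%g =1 id.
Proof.
case=> S T; rewrite /act2 /=; congr (_, _);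
  by rewrite (eq_imset _ (fun z => perm1 z)) imset_id.
Qed.

Lemma act2_M x : act_morph act2 x.
Proof.
move=> a b; case: x => S T; rewrite /act2 /=; congr (_, _);
  by rewrite -imset_comp; apply: eq_imset => z; rewrite /= permM.
Qed.

Definition to2 := TotalAction act2_1 act2_M.

Lemma imset_permP (p : 'S_n) (S : {set 'I_n}) : ([set p z | z in S] == S) = (p \in NP S).
Proof.
apply/eqP/NPP => [E z | H].
  by rewrite -{1}E mem_imset //; exact: perm_inj.
apply/eqP; rewrite eqEcard card_imset ?leqnn ?andbT; last exact: perm_inj.
by apply/subsetP => w /imsetP [z zS ->]; rewrite H.
Qed.

Lemma stab_eq (S T : {set 'I_n}) : ('C_[set: 'S_n][(S, T) | to2])%g = NP S :&: NP T.
Proof.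
rewrite setTI; apply/setP => p; rewrite [RHS]in_setI.
apply/astab1P/andP => [E | [h1 h2]].
  by move: E; rewrite /= /act2 /= => -[/eqP e1 /eqP e2]; rewrite -!imset_permP e1 e2.
by rewrite /= /act2 /=; move: h1 h2; rewrite -!imset_permP => /eqP -> /eqP ->.
Qed.

Definition cls (k l a d : nat) : {set pairT} :=
  [set x : pairT | [&& #|x.1| == k, #|x.2| == l, #|x.1 :&: x.2| == a & #|~: (x.1 :|: x.2)| == d]].

Lemma cardC_n (X : {set 'I_n}) : #|~: X| = (n - #|X|)%N.
Proof. by have := cardsC X; rewrite card_ord; move: (#|X|) (#|~: X|) => u v; lia. Qed.

Lemma act2_sizes (x : pairT) p :
  [/\ #|(act2 x p).1| = #|x.1|, #|(act2 x p).2| = #|x.2|,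
      #|(act2 x p).1 :&: (act2 x p).2| = #|x.1 :&: x.2| &
      #|~: ((act2 x p).1 :|: (act2 x p).2)| = #|~: (x.1 :|: x.2)|].
Proof.
case: x => S T; rewrite /act2 /=.
have inj : injective p by exact: perm_inj.
split; rewrite ?card_imset //.
  by rewrite -imsetI ?card_imset // => u v _ _; exact: inj.
by rewrite !cardC_n -imsetU card_imset.
Qed.

Definition cnt4 (S T : {set 'I_n}) (c : bool * bool) : nat :=
  match c with
  | (true, true) => #|S :&: T|
  | (true, false) => #|S| - #|S :&: T|
  | (false, true) => #|T| - #|S :&: T|
  | (false, false) => #|~: (S :|: T)|
  end.

Lemma cnt4E (S T : {set 'I_n}) c : #|[set z | (z \in S, z \in T) == c]| = cnt4 S T c.
Proof.
case: c => [[] []] /=.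
- have -> : [set z | (z \in S, z \in T) == (true, true)] = S :&: T.
    by apply/setP => z; rewrite !inE xpair_eqE !eqb_id.
  by [].
- have -> : [set z | (z \in S, z \in T) == (true, false)] = S :\: T.
    by apply/setP => z; rewrite !inE xpair_eqE; case: (z \in S); case: (z \in T).
  by rewrite cardsD.
- have -> : [set z | (z \in S, z \in T) == (false, true)] = T :\: S.
    by apply/setP => z; rewrite !inE xpair_eqE; case: (z \in S); case: (z \in T).
  by rewrite cardsD setIC.
- have -> : [set z | (z \in S, z \in T) == (false, false)] = ~: (S :|: T).
    by apply/setP => z; rewrite !inE xpair_eqE; case: (z \in S); case: (z \in T).
  by [].
Qed.

Lemma cls_orbit k l a d x0 : x0 \in cls k l a d -> cls k l a d = orbit to2 [set: 'S_n] x0.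
Proof.
move=> hx0; apply/setP => y; apply/idP/idP => [hy | /orbitP [p _ <-]]; last first.
  have [e1 e2 e3 e4] := act2_sizes x0 p.
  by move: hx0; rewrite !inE /= e1 e2 e3 e4.
apply/orbitP.
case: x0 hx0 => S0 T0; case: y hy => S T.
rewrite !inE /= => /and4P [/eqP h1 /eqP h2 /eqP h3 /eqP h4] /and4P [/eqP g1 /eqP g2 /eqP g3 /eqP g4].
have hle : (#|[set z | (z \in S, z \in T) != (z \in S0, z \in T0)]| <= n)%N.
  by apply: leq_trans (max_card _) _; rewrite card_ord.
have hcnt : forall c, #|[set z | (z \in S, z \in T) == c]| = #|[set z | (z \in S0, z \in T0) == c]|.
  by move=> c; rewrite !cnt4E; case: c => [[] []] /=; congruence.
have [p Hp] := @perm_match _ _ (fun z => (z \in S0, z \in T0)) n (fun z => (z \in S, z \in T)) hle hcnt.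
exists p; rewrite ?inE //= /act2 /=; congr (_, _); apply/setP => w;
  rewrite -[w](permKV p) mem_imset; try exact: perm_inj;
  by have := Hp (p^-1 w)%g => -[e1 e2]; rewrite ?e1 ?e2.
Qed.

Lemma sum_orbit x0 :
  (\sum_(y in orbit to2 [set: 'S_n] x0) #|('C_[set: 'S_n][y | to2])%g|)%N = n`!.
Proof.
set O := orbit to2 [set: 'S_n] x0.
have hG : #|[set: 'S_n]| = n`! by rewrite cardsT card_Sn.
have hO : (0 < #|O|)%N by apply/card_gt0P; exists x0; exact: orbit_refl.
have Hy : forall y, y \in O -> #|('C_[set: 'S_n][y | to2])%g| = (n`! %/ #|O|)%N.
  move=> y hy; have := card_orbit_stab to2 [set: 'S_n] y.
  by rewrite (orbit_eqP hy) -hG => <-; rewrite mulKn.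
rewrite (eq_bigr _ Hy) sum_nat_const mulnC divnK // -hG; exact: dvdn_orbit.
Qed.

Lemma cls_valid k l a d x : x \in cls k l a d -> [&& (a <= k)%N, (a <= l)%N & (n + a == k + l + d)%N].
Proof.
case: x => S T; rewrite inE /= => /and4P [/eqP h1 /eqP h2 /eqP h3 /eqP h4].
have e1 := subset_leq_card (subsetIl S T).
have e2 := subset_leq_card (subsetIr S T).
have e3 := cardsUI S T.
have e4 := cardsC (S :|: T); rewrite card_ord in e4.
move: h1 h2 h3 h4 e1 e2 e3 e4.
move: (#|S|) (#|T|) (#|S :&: T|) (#|S :|: T|) (#|~: (S :|: T)|) => u v w z q.
move=> h1 h2 h3 h4 e1 e2 e3 e4; apply/and3P; split; apply/eqP || idtac; lia.
Qed.

Lemma exists_sub (A : {set 'I_n}) m : (m <= #|A|)%N -> exists B : {set 'I_n}, B \subset A /\ #|B| = m.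
Proof.
elim: m => [|m IH] hm; first by exists (set0 : {set 'I_n}); rewrite sub0set cards0.
have [B [BA hB]] := IH (ltnW hm).
have : (0 < #|A :\: B|)%N by rewrite cardsD (setIidPr BA); lia.
move=> /card_gt0P [x]; rewrite inE => /andP [xB xA].
exists (x |: B); split; first by rewrite subUset sub1set xA BA.
by rewrite cardsU1 xB hB.
Qed.

Lemma cls_exists k l a d : [&& (a <= k)%N, (a <= l)%N & (n + a == k + l + d)%N] ->
  exists x, x \in cls k l a d.
Proof.
move=> /and3P [hak hal /eqP hn].
have hk : (k <= #|[set: 'I_n]|)%N by rewrite cardsT card_ord; lia.
have [S [_ hS]] := @exists_sub [set: 'I_n] k hk.
have ha : (a <= #|S|)%N by rewrite hS.
have [A [AS hA]] := @exists_sub S a ha.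
have hCS : (l - a <= #|~: S|)%N by rewrite cardC_n hS; lia.
have [C [CS hC]] := @exists_sub (~: S) (l - a) hCS.
have dAC : A :&: C = set0.
  apply/setP => z; rewrite !inE; apply/negP => /andP [zA zC].
  by move: (subsetP CS z zC); rewrite inE (subsetP AS z zA).
have dSC : S :&: C = set0.
  apply/setP => z; rewrite !inE; apply/negP => /andP [zS zC].
  by move: (subsetP CS z zC); rewrite inE zS.
exists (S, A :|: C); rewrite inE /=.
have hI : S :&: (A :|: C) = A by rewrite setIUr dSC setU0; apply/setIidPr.
have hU : S :|: (A :|: C) = S :|: C by rewrite setUA (setUidPl AS).
have cT : #|A :|: C| = (a + (l - a))%N by rewrite cardsU dAC cards0 hA hC subn0.
have cU : #|S :|: C| = (k + (l - a))%N by rewrite cardsU dSC cards0 hS hC subn0.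
rewrite hI hU cardC_n cT cU hA.
apply/and4P; split; apply/eqP => //; lia.
Qed.

Lemma class_sum k l a d :
  (\sum_(x in cls k l a d) #|('C_[set: 'S_n][x | to2])%g|)%N =
  if [&& (a <= k)%N, (a <= l)%N & (n + a == k + l + d)%N] then n`! else 0%N.
Proof.
case: (set_0Vmem (cls k l a d)) => [E0 | [x0 hx0]].
  rewrite E0 big_set0; case: ifP => // hv.
  have [x hx] := cls_exists hv; by rewrite E0 inE in hx.
by rewrite (cls_valid hx0) (cls_orbit hx0) sum_orbit.
Qed.
End Orb.


Lemma per_x (b : bool) (u v : nat) (c : rat) :
  (if b && (u <= 1)%N && (v <= 1)%N then c else 0) =
  \sum_(a < 2) \sum_(d < 2) (if b && (u == a) && (v == d) then c else 0).
Proof.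
rewrite !big_ord_recr !big_ord0 /= !add0r.
case: b => /=; last by rewrite !addr0.
by case: u => [|[|u]]; case: v => [|[|v]] /=; rewrite ?addr0 ?add0r.
Qed.

Lemma term_eq (b1 b2 : bool) (m : nat) : b1 = b2 ->
  ((if b1 then m else 0)%N)%:R = m%:R * (if b2 then 1 else 0) :> rat.
Proof. by move=> ->; case: b2; rewrite ?mulr1 ?mulr0. Qed.

Lemma total (n k l : nat) :
  (\sum_(S : {set 'I_n} | #|S| == k) \sum_(T : {set 'I_n} | #|T| == l) W S T) =
  (n`!)%:R * cnt k l n.
Proof.
under eq_bigr do under eq_bigr do rewrite W_val -stab_eq.
transitivity (\sum_(S : {set 'I_n}) \sum_(T : {set 'I_n})
   (if ((#|S| == k) && (#|T| == l)) && (#|S :&: T| <= 1)%N && (#|~: (S :|: T)| <= 1)%N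
    then (#|('C_[set: 'S_n][(S, T) | to2 n])%g|)%:R else 0 : rat)).
  rewrite big_mkcond; apply: eq_bigr => S _; case: (boolP (#|S| == k)) => hS /=.
    rewrite big_mkcond; apply: eq_bigr => T _; by case: (#|T| == l).
  by rewrite big1 // => T _.
rewrite pair_bigA /=.
rewrite (eq_bigr (fun x : {set 'I_n} * {set 'I_n} => \sum_(a < 2) \sum_(d < 2)
   (if (#|x.1| == k) && (#|x.2| == l) && (#|x.1 :&: x.2| == a) && (#|~: (x.1 :|: x.2)| == d)
    then (#|('C_[set: 'S_n][x | to2 n])%g|)%:R else 0 : rat))); last first.
  by move=> [S T] _ /=; exact: per_x.
rewrite exchange_big /=; under eq_bigr do rewrite exchange_big /=.
transitivity (\sum_(a < 2) \sum_(d < 2)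
   ((if [&& (a <= k)%N, (a <= l)%N & (n + a == k + l + d)%N] then n`! else 0%N)%:R : rat)).
  apply: eq_bigr => a _; apply: eq_bigr => d _.
  rewrite -class_sum natr_sum [RHS]big_mkcond; apply: eq_bigr => -[S T] _ /=.
  by rewrite inE /= -!andbA.
rewrite /cnt !mulrDr !big_ord_recr !big_ord0 /= !add0r -!addrA.
congr (_ + (_ + (_ + _))); apply: term_eq; apply/idP/idP; lia.
Qed.


Theorem theorem3p2 :
  exists Q : fps,
    fps_mul Q (fps_mul (fps_sub fps_one (fps_mul fps_u fps_z))
                       (fps_sub fps_one (fps_mul fps_v fps_z))) = fps_one /\
    (fun k l n => smoment n (fun x => E k x * E l x)) =
      fps_mul (fps_mul (fps_add fps_one fps_z)
                       (fps_add fps_one (fps_mul (fps_mul fps_u fps_v) fps_z))) Q.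
Proof.
exists Qs; split; first exact: Qs_inv.
rewrite rhs_eq; apply: functional_extensionality => k; apply: functional_extensionality => l;
apply: functional_extensionality => n.
rewrite /smoment (main_sum n k l) total mulrA mulVf ?mul1r //.
by rewrite pnatr_eq0 -lt0n fact_gt0.
Qed.
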